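(* For all integers $k_1,k_2,n_3$, the following identity holds in $\mathcal{F}$: $$R_{12}^{-1,k_2+1,n_3}+A^{2}R_{12}^{0,k_2,n_3-1}+A^2R_{12}^{0,k_2,n_3+1}+A^{4}R_{12}^{1,k_2-1,n_3}=0.$$
   Context: $\mathcal{F}$ is the free $\mathbb{Z}[A^{\pm1}]$-module with basis the symbols $s_1^{l_1}s_2^{l_2}s_3^{l_3}$, $l_i\ge 0$, extended multilinearly to integer exponents by $s_i^{-1}=0$ and $s_i^{n}=-s_i^{-n-2}$ for $n\le -2$. For $n_i\in\mathbb{Z}$, $R_{12}(n_1,n_2,n_3)=-A^{-n_1-n_2-2}s_1^{n_1}s_2^{n_2}s_3^{n_3}-A^{-n_1-n_2+2}s_1^{n_1-2}s_2^{n_2-2}s_3^{n_3}-A^{-n_1-n_2}s_1^{n_1-1}s_2^{n_2-1}s_3^{n_3+1}-A^{-n_1-n_2}s_1^{n_1-1}s_2^{n_2-1}s_3^{n_3-1}$, and $R_{12}^{n_1,n_2,n_3}=R_{12}(n_1,n_2,n_3)-R_{12}(-n_1+k_1,-n_2+k_2,n_3)$. *)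

(* Defs.v *)
From mathcomp Require Import all_boot all_algebra.
Set Implicit Arguments. Unset Strict Implicit. Unset Printing Implicit Defensive.
Import GRing.Theory Num.Theory.
Local Open Scope ring_scope.

(* The module F: the free Z[A^{+-1}]-module with basis s1^l1 s2^l2 s3^l3
   (l_i >= 0).  An element is represented by its coefficient function:
   (f l1 l2 l3 e) is the integer coefficient of A^e s1^l1 s2^l2 s3^l3.
   (Elements of F are the finitely supported such functions; F embeds in
   this function space, so identities are the same.) *)
Definition F := nat -> nat -> nat -> int -> int.

Definition zeroF : F := fun _ _ _ _ => 0.
Definition addF (f g : F) : F := fun a b c e => f a b c e + g a b c e.
Definition oppF (f : F) : F := fun a b c e => - f a b c e.
Definition scaleA (m : int) (f : F) : F := fun a b c e => f a b c (e - m).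

(* Extension of s_i^n to integer n: s^n = s^n for n >= 0, s^{-1} = 0,
   s^n = - s^{-n-2} for n <= -2.  Returned as (sign, exponent) or None (=0). *)
Definition red (n : int) : option (int * nat) :=
  match n with
  | Posz m => Some (1, m)
  | Negz 0 => None
  | Negz m.+1 => Some (-1, m)   (* n = -m-2, so -n-2 = m *)
  end.

Definition monoF (e n1 n2 n3 : int) : F :=
  match red n1, red n2, red n3 with
  | Some (c1, l1), Some (c2, l2), Some (c3, l3) =>
      fun a b c k =>
        if [&& a == l1, b == l2, c == l3 & k == e] then c1 * c2 * c3 else 0
  | _, _, _ => zeroF
  end.

Definition R12 (n1 n2 n3 : int) : F :=
  addF (oppF (monoF (- n1 - n2 - 2) n1 n2 n3))
  (addF (oppF (monoF (- n1 - n2 + 2) (n1 - 2) (n2 - 2) n3))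
  (addF (oppF (monoF (- n1 - n2) (n1 - 1) (n2 - 1) (n3 + 1)))
        (oppF (monoF (- n1 - n2) (n1 - 1) (n2 - 1) (n3 - 1))))).

Definition R12sup (k1 k2 n1 n2 n3 : int) : F :=
  addF (R12 n1 n2 n3) (oppF (R12 (- n1 + k1) (- n2 + k2) n3)).

(* Main.v *)
Require Import Defs.
From mathcomp Require Import all_boot all_algebra.
From mathcomp Require Import ring zify.
From Stdlib Require Import FunctionalExtensionality.
Local Open Scope ring_scope.
Import GRing.Theory.

Lemma Fext (f g : F) : (forall a b c k, f a b c k = g a b c k) -> f = g.
Proof.
move=> H; apply: functional_extensionality_dep => a; apply: functional_extensionality_dep => b.
apply: functional_extensionality_dep => c; apply: functional_extensionality_dep => k; exact: H.
Qed.

Lemma scale_add m f g : scaleA m (addF f g) = addF (scaleA m f) (scaleA m g).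
Proof. by []. Qed.
Lemma scale_opp m f : scaleA m (oppF f) = oppF (scaleA m f).
Proof. by []. Qed.
Lemma scale_mono m e n1 n2 n3 : scaleA m (monoF e n1 n2 n3) = monoF (e + m) n1 n2 n3.
Proof.
apply: Fext => a b c k.
rewrite /scaleA /monoF.
case: (red n1) => [[c1 l1]|]//; case: (red n2) => [[c2 l2]|]//; case: (red n3) => [[c3 l3]|]//.
by rewrite subr_eq.
Qed.
Lemma oppF0 : oppF zeroF = zeroF.
Proof. by apply: Fext => a b c k; rewrite /oppF /zeroF oppr0. Qed.
Lemma addF0l f : addF zeroF f = f.
Proof. by apply: Fext => a b c k; rewrite /addF /zeroF add0r. Qed.
Lemma addF0r f : addF f zeroF = f.
Proof. by apply: Fext => a b c k; rewrite /addF /zeroF addr0. Qed.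
Lemma oppFK f : oppF (oppF f) = f.
Proof. by apply: Fext => a b c k; rewrite /oppF opprK. Qed.

Lemma m1_1 e n2 n3 : monoF e (-1) n2 n3 = zeroF. Proof. by []. Qed.
Lemma m1_2 e n1 n3 : monoF e n1 (-1) n3 = zeroF.
Proof. by rewrite /monoF; case: (red n1) => [[]|]. Qed.
Lemma neg_1 e m n2 n3 : monoF e (Negz m.+1) n2 n3 = oppF (monoF e (Posz m) n2 n3).
Proof.
apply: Fext => a b c k; rewrite /monoF /=.
case: (red n2) => [[c2 l2]|]//; case: (red n3) => [[c3 l3]|]//=.
rewrite /oppF; case: ifP => _; last by rewrite oppr0.
by rewrite mulN1r mul1r mulNr.
Qed.
Lemma neg_2 e m n1 n3 : monoF e n1 (Negz m.+1) n3 = oppF (monoF e n1 (Posz m) n3).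
Proof.
apply: Fext => a b c k; rewrite /monoF /=.
case: (red n1) => [[c1 l1]|]//; case: (red n3) => [[c3 l3]|]//=.
rewrite /oppF; case: ifP => _; last by rewrite oppr0.
by rewrite mulrN1 mulr1 mulNr.
Qed.


Lemma mono_ext e e' n1 n1' n2 n2' n3 n3' : e = e' -> n1 = n1' -> n2 = n2' -> n3 = n3' ->
  monoF e n1 n2 n3 = monoF e' n1' n2' n3'.
Proof. by move=> -> -> -> ->. Qed.

Ltac solveF := lazymatch goal with
 | |- addF _ _ = addF _ _ => apply: (f_equal2 addF); solveF
 | |- oppF _ = oppF _ => apply: (f_equal oppF); solveF
 | |- monoF _ _ _ _ = monoF _ _ _ _ => apply: mono_ext; first [reflexivity | ring | lia]
 end.

Ltac simpR := rewrite /R12 ?scale_add ?scale_opp ?scale_mono ?m1_1 ?m1_2 ?oppF0 ?addF0l ?addF0r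
   ?neg_1 ?neg_2 ?oppFK.

Lemma LA m n : R12 (-1) (m+1) n =
  addF (monoF (-m+2) 1 (m-1) n) (addF (monoF (-m) 0 m (n+1)) (monoF (-m) 0 m (n-1))).
Proof. simpR. solveF. Qed.
Lemma LB m n : R12 (m+1) (-1) n =
  addF (monoF (-m+2) (m-1) 1 n) (addF (monoF (-m) m 0 (n+1)) (monoF (-m) m 0 (n-1))).
Proof. simpR. solveF. Qed.
Lemma LC m n : scaleA 2 (R12 0 m n) =
  addF (oppF (monoF (-m) 0 m n)) (monoF (-m+4) 0 (m-2) n).
Proof. simpR. solveF. Qed.
Lemma LD m n : scaleA 2 (R12 m 0 n) =
  addF (oppF (monoF (-m) m 0 n)) (monoF (-m+4) (m-2) 0 n).
Proof. simpR. solveF. Qed.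
Lemma LE m n : scaleA 4 (R12 1 (m-1) n) =
  addF (oppF (monoF (-m+2) 1 (m-1) n)) (addF (oppF (monoF (-m+4) 0 (m-2) (n+1))) (oppF (monoF (-m+4) 0 (m-2) (n-1)))).
Proof. simpR. solveF. Qed.
Lemma LF m n : scaleA 4 (R12 (m-1) 1 n) =
  addF (oppF (monoF (-m+2) (m-1) 1 n)) (addF (oppF (monoF (-m+4) (m-2) 0 (n+1))) (oppF (monoF (-m+4) (m-2) 0 (n-1)))).
Proof. simpR. solveF. Qed.

Theorem lemma3p6 (k1 k2 n3 : int) :
  addF (R12sup k1 k2 (-1) (k2 + 1) n3)
  (addF (scaleA 2 (R12sup k1 k2 0 k2 (n3 - 1)))
  (addF (scaleA 2 (R12sup k1 k2 0 k2 (n3 + 1)))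
        (scaleA 4 (R12sup k1 k2 1 (k2 - 1) n3)))) = zeroF.
Proof.
rewrite /R12sup !(scale_add _ (R12 _ _ _)) !(scale_opp _ (R12 _ _ _)).
rewrite (_ : - (-1) + k1 = k1 + 1); last by ring.
rewrite (_ : - (k2 + 1) + k2 = -1); last by ring.
rewrite (_ : - 0 + k1 = k1); last by ring.
rewrite (_ : - k2 + k2 = 0); last by ring.
rewrite (_ : - 1 + k1 = k1 - 1); last by ring.
rewrite (_ : - (k2 - 1) + k2 = 1); last by ring.
rewrite LA LB !LC !LD LE LF.
apply: Fext => a b c k; rewrite /addF /oppF /zeroF.
ring.
Qed.
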